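(* Let $(G,\mathcal{A})$ be a local convergence pairing on $X$, and let $B,A_1,\dots,A_m\in\mathcal{A}$ be a crossing sequence. Let $(f_i)\subset G$ act as a convergence sequence on $B$ with attractor $p$ and repeller $n$. If for all $1\le j\le m$ we have $n\notin A_j$ and $f_i^{-1}(p)\notin A_j$ for all $i$, then $f_i(A_j)\to p$ for all $1\le j\le m$.
   Context: $X$ is a Peano continuum (compact, connected, locally connected metric space) without cut points and $G$ acts on $X$ by homeomorphisms; $\mathcal{A}$ is a $G$-invariant collection of closed subsets of $X$. For a closed set $S\subset X$ and connected $B,C\subset X\setminus S$, $S$ separates $B$ from $C$ if they lie in different components of $X\setminus S$; $S$ separates $Y$ if it separates two points of $Y$. Closed sets $A,B$ cross if $A\cap B\neq\emptyset$ or ($A$ separates $B$ and $B$ separates $A$). A crossing sequence is a sequence $A_1,\dots,A_n$ with $A_i$ crossing $A_{i+1}$ for $1\le i<n$. For $S\subset X$ and $p\in X$, $g_i(S)\to p$ means every neighborhood of $p$ contains $g_i(S)$ for all large $i$. A sequence $(g_i)$ of homeomorphisms of a space $Y$ is a convergence sequence on $Y$ with repeller $n$ and attractor $p$ if $g_i(C)\to p$ for every compact $C\subset Y\setminus\{n\}$; a sequence in $G$ acting as a convergence sequence on $A\in\mathcal{A}$ means its elements preserve $A$ and their restrictions form a convergence sequence on $A$. A group acts as a convergence group on $Y$ if every sequence of distinct elements has a subsequence that is a convergence sequence on $Y$. $(G,\mathcal{A})$ is a local convergence pairing on $X$ if: (1) $|A|>2$ for all $A\in\mathcal{A}$; (2)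 for each $\epsilon>0$ only finitely many $A\in\mathcal{A}$ have diameter $>\epsilon$; (3) for any $x,y\in X$ some finite $\mathcal{B}\subset\mathcal{A}$ has $\bigcup\mathcal{B}$ separating $x$ from $y$; (4) each stabilizer $\mathrm{Stab}(A)=\{g: g(A)=A\}$ acts as a convergence group on $A$; (5) for any $A,B\in\mathcal{A}$ with $|A\cap B|\le 2$: if $A\cap B=\{c\}$ then for any $b\in B\setminus\{c\}$ there is a finite crossing sequence $A,A_1,\dots,A_n,B$ in $\mathcal{A}$ with $\{b,c\}\cap A_i=\emptyset$ for $1\le i\le n$; if $|A\cap B|\ne1$ there is a crossing sequence $A,A_1,\dots,A_n,B$ in $\mathcal{A}$ with $(A\cap B)\cap A_i=\emptyset$ for $1\le i\le n$. *)

(* Defs.v *)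
From HB Require Import structures.
From mathcomp Require Import all_boot all_order all_algebra.
From mathcomp Require Import all_classical all_reals all_analysis.
From Stdlib Require List.
Set Implicit Arguments. Unset Strict Implicit. Unset Printing Implicit Defensive.
Import Order.TTheory GRing.Theory Num.Theory.
Local Open Scope classical_set_scope.
Local Open Scope ring_scope.

Section Continuum.
Context {R : realType} (X : metricType R).

Definition locally_connected_space : Prop :=
  forall (x : X) (U : set X), nbhs x U ->
    exists V : set X, [/\ open V, connected V, V x & V `<=` U].

Definition peano_continuum : Prop :=
  [/\ [set: X] !=set0, compact [set: X], connected [set: X]
    & locally_connected_space].

Definition cut_point (x : X) : Prop := ~ connected (~` [set x]).

Definition no_cut_points : Prop := forall x : X, ~ cut_point x.

End Continuum.

(* An abstract (possibly infinite) group G, given by its operations and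
   (left) group axioms, acting on X; each element acts continuously, hence
   (by the action axioms) by a homeomorphism. *)
Record group_action (G : Type) (X : topologicalType) := GroupAction {
  gmul : G -> G -> G;
  ginv : G -> G;
  gone : G;
  gmulA : forall a b c, gmul a (gmul b c) = gmul (gmul a b) c;
  gmul1 : forall a, gmul gone a = a;
  gmulV : forall a, gmul (ginv a) a = gone;
  act : G -> X -> X;
  act1 : forall x, act gone x = x;
  actM : forall g h x, act (gmul g h) x = act g (act h x);
  act_cont : forall g, continuous (act g) }.

Section Pairing.
Context {R : realType} (X : metricType R) (G : Type) (GA : group_action G X).

Local Notation act := (act GA).
Local Notation ginv := (ginv GA).

Definition separates (S : set X) (x y : X) : Prop :=
  [/\ ~ S x, ~ S y & ~ connected_component (~` S) x y].

Definition separates_set (S Y : set X) : Prop :=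
  exists x y, [/\ Y x, Y y & separates S x y].

Definition crosses (A B : set X) : Prop :=
  (A `&` B !=set0) \/ (separates_set A B /\ separates_set B A).

(* crossing_chain A [:: A1; ...; Ak] : A, A1, ..., Ak is a crossing sequence *)
Fixpoint crossing_chain (A : set X) (s : seq (set X)) : Prop :=
  match s with
  | [::] => True
  | B :: s' => crosses A B /\ crossing_chain B s'
  end.

Definition conv_to (g : nat -> X -> X) (S : set X) (p : X) : Prop :=
  forall U : set X, nbhs p U ->
    exists N : nat, forall i : nat, (N <= i)%N -> g i @` S `<=` U.

Definition convergence_seq (Y : set X) (g : nat -> X -> X) (n p : X) : Prop :=
  [/\ Y n, Y p &
      forall C : set X, compact C -> C `<=` Y `\ n -> conv_to g C p].

Definition acts_as_convergence_seq (A : set X) (f : nat -> G) (n p : X) : Prop :=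
  (forall i, act (f i) @` A = A) /\
  convergence_seq A (fun i => act (f i)) n p.

Definition stab (A : set X) (g : G) : Prop := act g @` A = A.

Definition stab_convergence_group (A : set X) : Prop :=
  forall f : nat -> G, injective f -> (forall i, stab A (f i)) ->
    exists phi : nat -> nat, (forall i, (phi i < phi i.+1)%N) /\
      exists n p, convergence_seq A (fun i => act (f (phi i))) n p.

Definition diam_gt (A : set X) (eps : R) : Prop :=
  exists x y, [/\ A x, A y & eps < mdist x y].

Definition card_le2 (S : set X) : Prop := exists a b : X, S `<=` [set a; b].

Definition local_convergence_pairing (calA : set (set X)) : Prop :=
  [/\
      (forall A, calA A -> exists a b c : X,
          [/\ A a, A b, A c & [/\ a <> b, a <> c & b <> c]]),
      (forall eps : R, 0 < eps -> finite_set [set A | calA A /\ diam_gt A eps]),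
      (forall x y : X, x <> y -> exists calB : set (set X),
          [/\ finite_set calB, calB `<=` calA &
              separates (\bigcup_(B in calB) B) x y]),
      (forall A, calA A -> stab_convergence_group A) &
      (forall A B, calA A -> calA B -> card_le2 (A `&` B) ->
        (forall c, A `&` B = [set c] ->
          forall b, B b -> b <> c ->
            exists s : seq (set X), [/\ s <> [::], (forall Ai, List.In Ai s -> calA Ai),
              crossing_chain A (rcons s B) &
              (forall Ai, List.In Ai s -> ~ Ai b /\ ~ Ai c)]) /\
        ((~ exists c, A `&` B = [set c]) ->
            exists s : seq (set X), [/\ s <> [::], (forall Ai, List.In Ai s -> calA Ai),
              crossing_chain A (rcons s B) &
              (forall Ai, List.In Ai s -> Ai `&` (A `&` B) = set0)]))].

End Pairing.

(* Main.v *)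
Require Import Defs.
From HB Require Import structures.
From mathcomp Require Import all_boot all_order all_algebra.
From mathcomp Require Import all_classical all_reals all_analysis.
From mathcomp Require Import lra.
From Stdlib Require List.
Import Order.TTheory GRing.Theory Num.Theory.
Local Open Scope classical_set_scope.
Local Open Scope ring_scope.

Section Helpers.
Context {R : realType} (X : metricType R) (G : Type) (GA : group_action G X).

Local Notation gact := (act GA).
Local Notation gi := (ginv GA).

Lemma actK g x : gact (gi g) (gact g x) = x.
Proof. by rewrite -actM gmulV act1. Qed.

Lemma mulgV' g : gmul GA g (gi g) = gone GA.
Proof.
set h := gi g; set k := gi h.
rewrite -[gmul GA g h](gmul1 GA) -{1}(gmulV GA h) -/k.
rewrite -(gmulA GA k h (gmul GA g h)) (gmulA GA h g h) (gmulV GA g) (gmul1 GA).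
exact: gmulV.
Qed.

Lemma actKV g x : gact g (gact (gi g) x) = x.
Proof. by rewrite -actM mulgV' act1. Qed.

Lemma act_inj g x y : gact g x = gact g y -> x = y.
Proof. by move=> e; rewrite -(actK g x) e actK. Qed.

Lemma sep_transfer g (A : set X) a b : separates A a b ->
  separates (gact g @` A) (gact g a) (gact g b).
Proof.
move=> [Aa Ab Hc]; split.
- by move=> [y Ay /act_inj e]; apply: Aa; rewrite -e.
- by move=> [y Ay /act_inj e]; apply: Ab; rewrite -e.
move=> [K [Kga Ksub Kc] Kgb]; apply: Hc.
exists (gact (gi g) @` K); last by exists (gact g b) => //; rewrite actK.
split.
- by exists (gact g a) => //; rewrite actK.
- move=> _ [k Kk <-] Ak; apply: (Ksub k Kk).
  by exists (gact (gi g) k) => //; rewrite actKV.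
- apply: connected_continuous_connected => //.
  exact/continuous_subspaceT/act_cont.
Qed.

Definition ptc (f : nat -> G) (p x : X) :=
  forall U, nbhs p U -> exists N, forall i, (N <= i)%N -> U (gact (f i) x).

Definition Mcond (f : nat -> G) (p : X) (A : set X) :=
  forall e : R, 0 < e -> exists N, forall i, (N <= i)%N ->
    exists z, (gact (f i) @` A) z /\ mdist p z < e.

Lemma M_of_pt f p (A : set X) x : A x -> ptc f p x -> Mcond f p A.
Proof.
move=> Ax hx e e0.
have [N HN] := hx _ (nbhsx_ballx p _ e0).
exists N => i /HN hi; exists (gact (f i) x); split; first by exists x.
by move: hi; rewrite ballEmdist.
Qed.

Lemma M_of_sep (hlc : locally_connected_space X) f p (A : set X) a b :
  separates A a b -> ptc f p a -> ptc f p b -> Mcond f p A.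
Proof.
move=> sab ha hb e e0.
have [V [oV cV Vp sV]] := hlc p _ (nbhsx_ballx p _ e0).
have nV : nbhs p V by apply: open_nbhs_nbhs; split.
have [Na HNa] := ha _ nV; have [Nb HNb] := hb _ nV.
exists (maxn Na Nb) => i; rewrite geq_max => /andP[ia ib].
have [[z [hz Vz]]|no] := pselect (exists z, (gact (f i) @` A) z /\ V z).
  by exists z; split => //; have := sV z Vz; rewrite ballEmdist.
have [_ _ Hc] := @sep_transfer (f i) _ _ _ sab; exfalso; apply: Hc.
exists V; last exact: HNb.
split => //; first exact: HNa.
by move=> z Vz Az; apply: no; exists z.
Qed.

Lemma core (calA : set (set X)) (hclosed : forall A, calA A -> closed A)
  (hinv : forall (g : G) A, calA A -> calA (gact g @` A))
  (hfin : forall eps : R, 0 < eps -> finite_set [set A | calA A /\ diam_gt A eps])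
  (f : nat -> G) (p : X) (A : set X) (hA : calA A)
  (hav : forall i, ~ A (gact (gi (f i)) p)) (hM : Mcond f p A) :
  conv_to (fun i => gact (f i)) A p.
Proof.
move=> U /nbhs_ballP [r /= r0 hr].
have r20 : 0 < r / 2 by rewrite divr_gt0.
have [s hs] := (finite_seqP _).1 (hfin _ r20).
have claim : forall s' : seq (set X), (forall C, C \in s' -> calA C) ->
    exists N, forall i, (N <= i)%N -> forall C, C \in s' -> gact (f i) @` A <> C.
  elim => [|C s' IH] hs'; first by exists 0%N => i _ C; rewrite in_nil.
  have [N1 H1] := IH (fun C' h => hs' C' (ltac:(by rewrite in_cons h orbT))).
  have [Cp|nCp] := pselect (C p).
    exists N1 => i hi C'; rewrite in_cons => /orP[/eqP ->|h]; last exact: H1.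
    move=> e; move: Cp; rewrite -e => -[a Aa ea]; apply: (hav i).
    by rewrite -ea actK.
  have clC : closed C by apply: hclosed; apply: hs'; exact: mem_head.
  have nC : nbhs p (~` C) by apply: open_nbhs_nbhs; split => //; rewrite openC.
  move/nbhs_ballP: nC => [e /= e0 he].
  have [N2 H2] := hM _ e0.
  exists (maxn N1 N2) => i; rewrite geq_max => /andP[i1 i2] C'.
  rewrite in_cons => /orP[/eqP ->|h]; last exact: H1.
  move=> eq; have [z [hz pz]] := H2 i i2.
  apply: (he z); first by rewrite ballEmdist.
  by rewrite -eq.
have hsub : forall C, C \in s -> calA C.
  move=> C h; have : [set A | calA A /\ diam_gt A (r/2)] C.
    by rewrite hs /=.
  by case.
have [N1 H1] := claim s hsub.
have [N2 H2] := hM _ r20.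
exists (maxn N1 N2) => i; rewrite geq_max => /andP[i1 i2] y [a Aa <-].
apply: hr; rewrite ballEmdist /=.
have [z [hz hpz]] := H2 i i2.
have notF : ~ (calA (gact (f i) @` A) /\ diam_gt (gact (f i) @` A) (r/2)).
  move=> h; have : [set` s] (gact (f i) @` A) by rewrite -hs.
  by move=> /= hin; exact: (H1 i i1 _ hin).
have nd : mdist z (gact (f i) a) <= r / 2.
  rewrite leNgt; apply/negP => hlt; apply: notF; split; first exact: hinv.
  by exists z, (gact (f i) a); split => //; exists a.
have := metric_triangle p z (gact (f i) a).
lra.
Qed.


Lemma ptc_conv f p (A : set X) x :
  conv_to (fun i => gact (f i)) A p -> A x -> ptc f p x.
Proof.
move=> hc Ax U hU; have [N HN] := hc U hU.
by exists N => i hi; apply: (HN i hi); exists x.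
Qed.

Lemma ptc_B (B : set X) f n p x :
  acts_as_convergence_seq GA B f n p -> B x -> x <> n -> ptc f p x.
Proof.
move=> [_ [_ _ hc]] Bx xn U hU.
have sub : [set x] `<=` B `\ n by move=> y /= ->; split.
have [N HN] := hc [set x] (@compact_set1 _ x) sub U hU.
by exists N => i hi; apply: (HN i hi); exists x.
Qed.

Lemma sep_sym (A : set X) x y : separates A x y -> separates A y x.
Proof.
by move=> [a b c]; split => // h; apply: c; apply: connected_component_sym.
Qed.

Lemma sep_neq (A : set X) x y : separates A x y -> x <> y.
Proof.
move=> [a b c] e; apply: c; rewrite e; exact: connected_component_refl.
Qed.

Lemma sep_move (A V : set X) x y b : connected V -> V `<=` ~` A -> V x -> V b ->
  separates A x y -> separates A b y.
Proof.
move=> cV sV Vx Vb [ax ay c]; split => //; first exact: sV.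
move=> h; apply: c.
apply: (@connected_component_trans X (~` A) b x y) => //.
by exists V.
Qed.

Lemma nonisolated (cX : compact [set: X]) (B : set X) (clB : closed B)
  (f : nat -> G) (n p : X) (hf : acts_as_convergence_seq GA B f n p)
  (h3 : exists a b c : X, [/\ B a, B b, B c & [/\ a <> b, a <> c & b <> c]])
  (V : set X) (oV : open V) (Vn : V n) : exists b, [/\ B b, b <> n & V b].
Proof.
apply: contrapT => H.
have Hb : forall b, B b -> V b -> b = n.
  by move=> b Bb Vb; apply: contrapT => bn; apply: H; exists b.
pose K := B `\ n.
have KE : K = B `&` ~` V.
  apply/seteqP; split => x /=.
    by move=> [Bx xn]; split => // Vx; apply: xn; exact: Hb.
  by move=> [Bx nV]; split => // xn; apply: nV; rewrite xn.
have clK : closed K by rewrite KE; apply: closedI => //; rewrite closedC.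
have cK : compact K by apply: (subclosed_compact clK cX); exact: subsetT.
have [hB [Bn _ hconv]] := hf.
have cvK := hconv K cK (@subset_refl _ K).
have Bimg : forall i x, B x -> B (gact (f i) x).
  by move=> i x Bx; rewrite -(hB i); exists x.
have Bpre : forall i y, B y -> exists x, B x /\ gact (f i) x = y.
  move=> i y By; have : (gact (f i) @` B) y by rewrite hB.
  by case=> x Bx <-; exists x.
have [a [b [c [Ba Bb Bc [ab ac bc]]]]] := h3.
have [np|np] := pselect (n = p).
  have [u [v [Ku Kv uv]]] : exists u v, [/\ K u, K v & u <> v].
    have [an|an] := pselect (a = n).
      exists b, c; split => //; split => // e; congruence.
    have [bn|bn] := pselect (b = n).
      exists a, c; split => //; split => // e; congruence.
    by exists a, b; split.
  have nK : nbhs p (~` K).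
    apply: open_nbhs_nbhs; split; first by rewrite openC.
    by rewrite -np => -[_]; apply.
  have [N HN] := cvK _ nK.
  have fn : forall w, K w -> gact (f N) w = n.
    move=> w Kw; apply: contrapT => wn.
    apply: (HN N (leqnn N) (gact (f N) w)); first by exists w.
    split => //; apply: Bimg; exact: Kw.1.
  by apply: uv; apply: (@act_inj (f N)); rewrite !fn.
have [u [Ku up]] : exists u, K u /\ u <> p.
  apply: contrapT => Hn.
  have hh : forall x, B x -> x = n \/ x = p.
    move=> x Bx; have [xn|xn] := pselect (x = n); first by left.
    right; apply: contrapT => xp; apply: Hn; exists x; split => //.
  move: (hh a Ba) (hh b Bb) (hh c Bc) => [] ea [] eb [] ec; congruence.
have d0 : 0 < mdist p n by rewrite mdist_gt0; apply/negP => /eqP e; apply: np; rewrite e.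
have [N1 H1] := cvK _ (nbhsx_ballx p _ d0).
have fn : forall i, (N1 <= i)%N -> gact (f i) n = n.
  move=> i hi; have [x [Bx ex]] := Bpre i n Bn.
  have [xn|xn] := pselect (x = n); first by move: ex; rewrite xn.
  have := H1 i hi (gact (f i) x) (ex_intro2 _ _ x (conj Bx xn) erefl).
  by rewrite ex ballEmdist /= ltxx.
have uin : forall i, (N1 <= i)%N -> (gact (f i) @` K) u.
  move=> i hi; have [x [Bx ex]] := Bpre i u Ku.1.
  have [xn|xn] := pselect (x = n).
    by exfalso; apply: Ku.2; rewrite -ex xn fn.
  by exists x.
have d2 : 0 < mdist p u by rewrite mdist_gt0; apply/negP => /eqP e; apply: up; rewrite e.
have [N2 H2] := cvK _ (nbhsx_ballx p _ d2).
have := H2 (maxn N1 N2) (leq_maxr _ _) u (uin _ (leq_maxl _ _)).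
by rewrite ballEmdist /= ltxx.
Qed.


Lemma stepP (hlc : locally_connected_space X) (calA : set (set X))
  (hclosed : forall A, calA A -> closed A)
  (hinv : forall (g : G) A, calA A -> calA (gact g @` A))
  (hfin : forall eps : R, 0 < eps -> finite_set [set A | calA A /\ diam_gt A eps])
  (f : nat -> G) (p : X) (Ap : set X)
  (hcv : conv_to (fun i => gact (f i)) Ap p) (A' : set X) (hA' : calA A')
  (hav : forall i, ~ A' (gact (gi (f i)) p)) (hcr : crosses Ap A') :
  conv_to (fun i => gact (f i)) A' p.
Proof.
apply: (@core calA hclosed hinv hfin f p A' hA' hav).
case: hcr => [[x [Apx A'x]]|[_ [a [b [Apa Apb sab]]]]].
  by apply: (@M_of_pt f p A' x A'x); exact: (ptc_conv _ _ _ _ hcv Apx).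
by apply: (@M_of_sep hlc f p A' a b sab); [exact: (ptc_conv _ _ _ _ hcv Apa)|exact: (ptc_conv _ _ _ _ hcv Apb)].
Qed.

Lemma baseP (hlc : locally_connected_space X) (cX : compact [set: X])
  (calA : set (set X))
  (hclosed : forall A, calA A -> closed A)
  (hinv : forall (g : G) A, calA A -> calA (gact g @` A))
  (hfin : forall eps : R, 0 < eps -> finite_set [set A | calA A /\ diam_gt A eps])
  (B : set X) (hB : calA B)
  (h3 : exists a b c : X, [/\ B a, B b, B c & [/\ a <> b, a <> c & b <> c]])
  (f : nat -> G) (n p : X) (hf : acts_as_convergence_seq GA B f n p)
  (A' : set X) (hA' : calA A') (hAn : ~ A' n)
  (hav : forall i, ~ A' (gact (gi (f i)) p)) (hcr : crosses B A') :
  conv_to (fun i => gact (f i)) A' p.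
Proof.
apply: (@core calA hclosed hinv hfin f p A' hA' hav).
case: hcr => [[x [Bx A'x]]|[_ [b1 [b2 [Bb1 Bb2 sab]]]]].
  apply: (@M_of_pt f p A' x A'x); apply: (@ptc_B _ _ _ _ _ hf Bx) => xn; apply: hAn; rewrite -xn.
  exact: A'x.
have clA' := hclosed A' hA'.
have nA : nbhs n (~` A') by apply: open_nbhs_nbhs; split => //; rewrite openC.
have [V [oV cV Vn sV]] := hlc n _ nA.
have [b [Bb bn Vb]] := @nonisolated cX B (hclosed B hB) f n p hf h3 V oV Vn.
have fix1 : forall x y, separates A' x y -> B x ->
    exists x', [/\ separates A' x' y, B x' & x' <> n].
  move=> x y sxy Bx; have [xn|xn] := pselect (x = n); last by exists x.
  exists b; split => //; apply: (@sep_move _ _ _ _ _ cV sV _ Vb sxy); rewrite xn.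
  exact: Vn.
have [b2n|b2n] := pselect (b2 = n).
  have b1n : b1 <> n by move=> e; apply: (@sep_neq _ _ _ sab); rewrite e b2n.
  have [x' [sx Bx' x'n]] := fix1 _ _ (@sep_sym _ _ _ sab) Bb2.
  by apply: (@M_of_sep hlc f p A' _ _ sx); apply: (@ptc_B _ _ _ _ _ hf).
have [x' [sx Bx' x'n]] := fix1 _ _ sab Bb1.
by apply: (@M_of_sep hlc f p A' _ _ sx); apply: (@ptc_B _ _ _ _ _ hf).
Qed.

End Helpers.

Theorem lemma4p5 (R : realType) (X : metricType R)
    (hX : peano_continuum X) (hcut : no_cut_points X)
    (G : Type) (GA : group_action G X) (calA : set (set X))
    (hclosed : forall A, calA A -> closed A)
    (hinv : forall (g : G) A, calA A -> calA (act GA g @` A))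
    (hpair : local_convergence_pairing GA calA)
    (B : set X) (As : seq (set X))
    (hB : calA B) (hAs : forall Aj, List.In Aj As -> calA Aj)
    (hchain : crossing_chain B As)
    (f : nat -> G) (n p : X)
    (hf : acts_as_convergence_seq GA B f n p)
    (havoid : forall Aj, List.In Aj As ->
       ~ Aj n /\ forall i, ~ Aj (act GA (ginv GA (f i)) p)) :
  forall Aj, List.In Aj As -> conv_to (fun i => act GA (f i)) Aj p.
Proof.
move: hpair => [h1 h2 h3 h4 h5].
move: hX => [_ cX _ hlc].
have key : forall (s : seq (set X)) (Ap : set X),
    (forall A', calA A' -> ~ A' n -> (forall i, ~ A' (act GA (ginv GA (f i)) p)) ->
       crosses Ap A' -> conv_to (fun i => act GA (f i)) A' p) ->
    crossing_chain Ap s -> (forall Aj, List.In Aj s -> calA Aj) ->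
    (forall Aj, List.In Aj s -> ~ Aj n /\ forall i, ~ Aj (act GA (ginv GA (f i)) p)) ->
    forall Aj, List.In Aj s -> conv_to (fun i => act GA (f i)) Aj p.
  elim => [|A s IH] Ap HP //= [cr ch] hs hv.
  have cA : conv_to (fun i => act GA (f i)) A p.
    have [hn hi] := hv A (or_introl erefl).
    exact: HP A (hs A (or_introl erefl)) hn hi cr.
  move=> Aj [<-|hin]; first exact: cA.
  apply: (IH A) => //.
  - move=> A' hA' _ hi cr'; exact: (@stepP _ _ _ _ hlc calA hclosed hinv h2 f p A cA A' hA' hi cr').
  - by move=> Ak hk; apply: hs; right.
  - by move=> Ak hk; apply: hv; right.
apply: (key As B) => //.
move=> A' hA' hn hi cr.
exact: (@baseP _ _ _ _ hlc cX calA hclosed hinv h2 B hB (h1 B hB) f n p hf A' hA' hn hi cr).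
Qed.
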